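(* Let $M$ be a nonsingular real symmetric $n \times n$ matrix and let $\alpha \subseteq \{1,\dots,n\}$ with $|\alpha| \geq 2$ such that every subset $\gamma \subseteq \alpha$ with $|\gamma|=2$ is a P-set of $M$. Then $\alpha$ is a P-set of $M$.
   Context: All matrices are real. For an $n\times n$ matrix $A$ and $\alpha \subseteq \{1,\dots,n\}$, $A(\alpha)$ denotes the principal submatrix obtained by deleting the rows and columns indexed by $\alpha$, and $\nu(A)$ denotes the nullity of $A$. A set $\alpha$ is a P-set of $A$ if $\nu(A(\alpha)) = \nu(A) + |\alpha|$. *)

(* Defs.v *)
(* Real matrices are stated over an arbitrary real closed field
   (rcfType); by Tarski transfer this is equivalent to the statement over R. *)
From HB Require Import structures.
From mathcomp Require Import all_boot all_order all_algebra.
Set Implicit Arguments. Unset Strict Implicit. Unset Printing Implicit Defensive.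
Import Order.TTheory GRing.Theory Num.Theory.
Local Open Scope ring_scope.

Definition nullity (R : fieldType) (m : nat) (A : 'M[R]_m) : nat :=
  (m - \rank A)%N.

(* A(alpha): principal submatrix obtained by deleting the rows and columns
   indexed by alpha; rows/columns kept in increasing order (enum order). *)
Definition pdel (R : fieldType) (n : nat) (A : 'M[R]_n) (a : {set 'I_n})
  : 'M[R]_#|~: a| :=
  \matrix_(i, j) A (enum_val i) (enum_val j).

Definition Pset (R : fieldType) (n : nat) (A : 'M[R]_n) (a : {set 'I_n}) : Prop :=
  nullity (pdel A a) = (nullity A + #|a|)%N.

(* Main.v *)
Require Import Defs.
From HB Require Import structures.
From mathcomp Require Import all_boot all_order all_algebra.
Import GRing.Theory Num.Theory.
Local Open Scope ring_scope.

Lemma null_core (R : fieldType) n m k (M B : 'M[R]_n) (E : 'M_(m,n)) (F : 'M_(k,n)) :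
 M *m B = 1%:M -> B *m M = 1%:M -> E^T *m E + F^T *m F = 1%:M ->
 E *m E^T = 1%:M -> F *m F^T = 1%:M -> E *m F^T = 0 -> F *m E^T = 0 ->
 nullity (E *m M *m E^T) = nullity (F *m B *m F^T).
Proof.
move=> MB BM HI EE FF EF FE.
have expand : forall p q (U : 'M[R]_(p,n)) (V : 'M[R]_(n,q)),
   U *m E^T *m (E *m V) + U *m F^T *m (F *m V) = U *m V.
  move=> p q U V; rewrite !mulmxA -mulmxDl -!(mulmxA U) -mulmxDr HI mulmx1 //.
set S := E *m M *m E^T; set W := F *m B *m F^T.
have H1 : S *m (E *m B *m E^T) + (E *m M *m F^T) *m (F *m B *m E^T) = 1%:M.
  rewrite /S /W; transitivity ((E *m M) *m E^T *m (E *m (B *m E^T)) + (E *m M) *m F^T *m (F *m (B *m E^T))); first by rewrite !mulmxA.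
  by rewrite expand -mulmxA (mulmxA M) MB mul1mx EE.
have H2 : S *m (E *m B *m F^T) + (E *m M *m F^T) *m W = 0.
  rewrite /S /W; transitivity ((E *m M) *m E^T *m (E *m (B *m F^T)) + (E *m M) *m F^T *m (F *m (B *m F^T))); first by rewrite !mulmxA.
  by rewrite expand -mulmxA (mulmxA M) MB mul1mx EF.
have H3 : (F *m B *m E^T) *m S + W *m (F *m M *m E^T) = 0.
  rewrite /S /W; transitivity ((F *m B) *m E^T *m (E *m (M *m E^T)) + (F *m B) *m F^T *m (F *m (M *m E^T))); first by rewrite !mulmxA.
  by rewrite expand -mulmxA (mulmxA B) BM mul1mx FE.
have H4 : (F *m B *m E^T) *m (E *m M *m F^T) + W *m (F *m M *m F^T) = 1%:M.
  rewrite /S /W; transitivity ((F *m B) *m E^T *m (E *m (M *m F^T)) + (F *m B) *m F^T *m (F *m (M *m F^T))); first by rewrite !mulmxA.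
  by rewrite expand -mulmxA (mulmxA B) BM mul1mx FF.
rewrite /nullity -!mxrank_ker; apply/eqP; rewrite eqn_leq; apply/andP; split.
- set K := kermx S.
  have KS : K *m S = 0 by apply: mulmx_ker.
  have sub : (K *m (E *m M *m F^T) <= kermx W)%MS.
    apply/sub_kermxP; rewrite -(mulmxA K).
    have -> : (E *m M *m F^T) *m W = - (S *m (E *m B *m F^T)).
      by apply/eqP; rewrite -addr_eq0 addrC H2.
    by rewrite mulmxN (mulmxA K S) KS mul0mx oppr0.
  apply: leq_trans (mxrankS sub).
  have HK : K = K *m (E *m M *m F^T) *m (F *m B *m E^T).
    by rewrite -mulmxA -[LHS]mulmx1 -H1 mulmxDr mulmxA KS mul0mx add0r.
  by rewrite {1}HK; apply: mxrankM_maxl.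
- set L := kermx W.
  have LW : L *m W = 0 by apply: mulmx_ker.
  have sub : (L *m (F *m B *m E^T) <= kermx S)%MS.
    apply/sub_kermxP; rewrite -(mulmxA L).
    have -> : (F *m B *m E^T) *m S = - (W *m (F *m M *m E^T)).
      by apply/eqP; rewrite -addr_eq0 H3.
    by rewrite mulmxN (mulmxA L W) LW mul0mx oppr0.
  apply: leq_trans (mxrankS sub).
  have HL : L = L *m (F *m B *m E^T) *m (E *m M *m F^T).
    by rewrite -mulmxA -[LHS]mulmx1 -H4 mulmxDr (mulmxA L W) LW mul0mx addr0.
  by rewrite {1}HL; apply: mxrankM_maxl.
Qed.


Definition sel (R : fieldType) {n} (A : {set 'I_n}) : 'M[R]_(#|A|, n) :=
  \matrix_(i, j) ((enum_val i == j)%:R).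

Lemma sel_mul (R : fieldType) n p (A : {set 'I_n}) (N : 'M[R]_(n,p)) :
  sel R A *m N = \matrix_(i, j) N (enum_val i) j.
Proof.
apply/matrixP => i j; rewrite !mxE (bigD1 (enum_val i)) //= big1 => [|l Hl].
  by rewrite mxE eqxx mul1r addr0.
by rewrite mxE eq_sym (negbTE Hl) mul0r.
Qed.

Lemma mul_selT (R : fieldType) n p (A : {set 'I_n}) (N : 'M[R]_(p,n)) :
  N *m (sel R A)^T = \matrix_(i, j) N i (enum_val j).
Proof.
apply/matrixP => i j; rewrite !mxE (bigD1 (enum_val j)) //= big1 => [|l Hl].
  by rewrite !mxE eqxx mulr1 addr0.
by rewrite !mxE eq_sym (negbTE Hl) mulr0.
Qed.

Lemma selTsel (R : fieldType) n (A : {set 'I_n}) i j :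
  ((sel R A)^T *m sel R A) i j = ((i \in A) && (i == j))%:R.
Proof.
rewrite mxE; case: (boolP (i \in A)) => iA /=.
  rewrite (bigD1 (enum_rank_in iA i)) //= big1 => [|l Hl].
    by rewrite !mxE enum_rankK_in // eqxx mul1r addr0.
  rewrite !mxE; case: eqP => [E|]; last by rewrite mul0r.
  by case/eqP: Hl; apply: enum_val_inj; rewrite E enum_rankK_in.
rewrite big1 // => l _; rewrite !mxE; case: eqP => [E|]; last by rewrite mul0r.
by move: (enum_valP l); rewrite E (negbTE iA).
Qed.

Lemma sel_split (R : fieldType) n (A : {set 'I_n}) :
  (sel R (~: A))^T *m sel R (~: A) + (sel R A)^T *m sel R A = 1%:M.
Proof.
apply/matrixP => i j; rewrite [LHS]mxE !selTsel in_setC mxE.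
by case: (i \in A); case: (i == j); rewrite /= ?add0r ?addr0.
Qed.

Lemma sel_selT (R : fieldType) n (A : {set 'I_n}) : sel R A *m (sel R A)^T = 1%:M.
Proof.
rewrite mul_selT; apply/matrixP => i j; rewrite !mxE.
by rewrite (inj_eq enum_val_inj).
Qed.

Lemma sel_selCT (R : fieldType) n (A : {set 'I_n}) : sel R A *m (sel R (~: A))^T = 0.
Proof.
rewrite mul_selT; apply/matrixP => i j; rewrite !mxE.
case: eqP => // E; move: (enum_valP j); rewrite -E in_setC.
by rewrite (enum_valP i).
Qed.

Lemma sel_selCT' (R : fieldType) n (A : {set 'I_n}) : sel R (~: A) *m (sel R A)^T = 0.
Proof.
rewrite mul_selT; apply/matrixP => i j; rewrite !mxE.
case: eqP => // E; move: (enum_valP i); rewrite E in_setC.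
by rewrite (enum_valP j).
Qed.

Lemma pdelE (R : fieldType) n (M : 'M[R]_n) (a : {set 'I_n}) :
  pdel M a = sel R (~: a) *m M *m (sel R (~: a))^T.
Proof. by rewrite mul_selT sel_mul; apply/matrixP => i j; rewrite !mxE. Qed.

Lemma nullity_pdel (R : fieldType) n (M : 'M[R]_n) (a : {set 'I_n}) :
  M \in unitmx ->
  nullity (pdel M a) = (#|a| - \rank (sel R a *m invmx M *m (sel R a)^T))%N.
Proof.
move=> Mu; rewrite pdelE (@null_core _ _ _ _ M (invmx M) _ (sel R a))
  ?mulmxV ?mulVmx ?sel_split ?sel_selT ?sel_selCT ?sel_selCT' //.
Qed.

From mathcomp Require Import zify.

Theorem theorem2p4 (R : rcfType) (n : nat) (M : 'M[R]_n) (a : {set 'I_n}) :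
  M^T = M -> M \in unitmx -> (2 <= #|a|)%N ->
  (forall g : {set 'I_n}, g \subset a -> #|g| = 2%N -> Pset M g) ->
  Pset M a.
Proof.
move=> _ Mu ha hp.
set B := invmx M.
have nM : nullity M = 0%N by rewrite /nullity mxrank_unit // subnn.
have Wentry : forall (g : {set 'I_n}) (p q : 'I_#|g|),
    (sel R g *m B *m (sel R g)^T) p q = B (enum_val p) (enum_val q).
  by move=> g p q; rewrite mul_selT sel_mul !mxE.
have zero_g : forall g : {set 'I_n}, Pset M g -> sel R g *m B *m (sel R g)^T = 0.
  move=> g; rewrite /Pset nullity_pdel // nM add0n => H.
  apply/eqP; rewrite -mxrank_eq0.
  have := rank_leq_row (sel R g *m B *m (sel R g)^T).
  move: H; set r := \rank _; move=> H1 H2; apply/eqP; lia.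
have Bij : forall i j, i \in a -> j \in a -> B i j = 0.
  move=> i j ia ja.
  have [g [gi gj ga g2]] : exists g : {set 'I_n},
      [/\ i \in g, j \in g, g \subset a & #|g| = 2%N].
    case: (eqVneq i j) => [<-|ij].
      have : (0 < #|a :\ i|)%N by move: ha; rewrite (cardsD1 i a) ia; lia.
      case/card_gt0P => l; rewrite !inE => /andP [li la].
      exists [set i; l]; split; rewrite ?inE ?eqxx //.
        by apply/subsetP => x; rewrite !inE => /orP [] /eqP ->.
      by rewrite cards2 eq_sym li.
    exists [set i; j]; split; rewrite ?inE ?eqxx ?orbT //.
      by apply/subsetP => x; rewrite !inE => /orP [] /eqP ->.
    by rewrite cards2 ij.
  have := zero_g g (hp g ga g2).
  move/(congr1 (fun N : 'M[R]_#|g| => N (enum_rank_in gi i) (enum_rank_in gi j))).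
  by rewrite Wentry !mxE (enum_rankK_in gi gi) (enum_rankK_in gi gj).
rewrite /Pset nullity_pdel // nM add0n.
have -> : sel R a *m B *m (sel R a)^T = 0.
  by apply/matrixP => p q; rewrite Wentry mxE Bij // enum_valP.
by rewrite mxrank0 subn0.
Qed.
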